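(* Let $U\subset E$ be the open subset defined by $\theta_1\neq0,\dots,\theta_c\neq0$, $x_1\neq0,\dots,x_r\neq0$, and let $\phi:U\to V_{\mathrm{GHV}}$ be the isomorphism onto the GHV locus described in the context. Then the function $\phi^*W$ on $U$, where $W=x_1+\dots+x_r$, extends holomorphically across the loci in $E$ where $\theta_1,\dots,\theta_c$ vanish; that is, $\phi^*W$ extends to a holomorphic function on the open subset $\{[x]\in E: x_1\cdots x_r\neq0\}$ of $E$.
   Context: Let $Y$ be a Fano toric orbifold with fan in a lattice $N$, with rays $\rho_1,\dots,\rho_r\in N$; exact sequences $0\to\mathbb{L}\to\mathbb{Z}^r\xrightarrow{\rho}N\to0$ ($\rho(e_i)=\rho_i$) and $0\to M\to(\mathbb{Z}^r)^\vee\xrightarrow{D}\mathbb{L}^\vee\to0$, $\mathbb{L}^\vee\cong\mathrm{Pic}(Y)$, $D_i=D(e_i^\vee)$. Let $L_1,\dots,L_c$ be line bundles on $Y$, with pairwise disjoint $S_1,\dots,S_c\subset\{1,\dots,r\}$ such that $L_i=\sum_{j\in S_i}D_j$, and $S_0=\{1,\dots,r\}\setminus(S_1\cup\dots\cup S_c)$. Coordinates $x_1,\dots,x_r$ on $\mathbb{C}^r=(\mathbb{Z}^r)^\vee\otimes\mathbb{C}$. The GHV locus $V_{\mathrm{GHV}}$ is the subvariety of $(\mathbb{C}^\times)^r$ defined by $\sum_{j\in S_i}y_j=1$ for $i=1,\dots,c$ (coordinates $y_1,\dots,y_r$), and $W=y_1+\dots+y_r$ on it. A tower of bundles is a linear map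 $\zeta:N\to(\mathbb{Z}^c)^\vee$ such that, with $\zeta_k=\zeta(\rho_k)$, for $k\in S_i$: $\zeta_k(e_j)=w_{jk}$ if $j<i$ or $i=0$, $=1$ if $j=i$, $=0$ if $j>i$, with integers $w_{jk}\le0$. Fix one. $(\mathbb{C}^\times)^c$ acts on $\mathbb{C}^r$ by $(g\cdot x)_k=\big(\prod_j g_j^{\zeta_k(e_j)}\big)x_k$, and $E=\mathbb{C}^r/\!\!/(\mathbb{C}^\times)^c$ is the GIT quotient with stability condition $(1,\dots,1)$. Define $\theta_k(x)=\sum_{j\in S_k}\big(\prod_{m=1}^{k-1}\theta_m(x)^{-w_{mj}}\big)x_j$ recursively for $k=1,\dots,c$. The isomorphism $\phi:U\to V_{\mathrm{GHV}}$ sends the class of $x$ to $y$ where, for $j\in S_k$, $y_j=x_j\theta_k^{-1}\prod_{m=1}^{k-1}\theta_m^{-w_{mj}}$ if $k\neq0$ and $y_j=x_j\prod_{m=1}^{c}\theta_m^{-w_{mj}}$ if $k=0$ (these expressions are invariant under the $(\mathbb{C}^\times)^c$-action). *)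

(* Defs.v *)
From HB Require Import structures.
From mathcomp Require Import all_boot all_order all_algebra.
From mathcomp Require Import all_classical all_reals all_analysis.
From mathcomp Require Import complex.
Set Implicit Arguments. Unset Strict Implicit. Unset Printing Implicit Defensive.
Import Order.TTheory GRing.Theory Num.Theory.
Import numFieldNormedType.Exports.
Local Open Scope ring_scope.

(* Combinatorial data of a tower of bundles.
   r = number of rays, c = number of line bundles.
   [part k] = i means ray k lies in S_i (i = 0 means S_0, i in 1..c means S_i).
   [w m k]  = w_{(m+1) k}  (0-based index m : 'I_c for the bundle index m+1). *)

Section Tower.
Variables (R : realType) (r c : nat) (part : 'I_r -> 'I_c.+1) (w : 'I_c -> 'I_r -> int).

Local Notation C := (R[i]).

Definition zeta (k : 'I_r) (j : 'I_c) : int :=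
  let i := (part k : nat) in
  if i == 0%N then w j k
  else if (j.+1 < i)%N then w j k
  else if j.+1 == i then 1 else 0.

Definition tact (g : 'I_c -> C) (x : 'rV[C]_r) : 'rV[C]_r :=
  \row_k ((\prod_(j < c) g j ^ zeta k j) * x ord0 k).

Fixpoint thetas (x : 'rV[C]_r) (n : nat) : seq C :=
  match n with
  | 0 => [::]
  | n'.+1 =>
      let t := thetas x n' in
      rcons t (\sum_(j < r | (part j : nat) == n'.+1)
                 (\prod_(m < c | (m < n')%N) t`_m ^ (- w m j)) * x ord0 j)
  end.

Definition theta (x : 'rV[C]_r) (k : 'I_c) : C := (thetas x c)`_k.

Definition phi_coord (x : 'rV[C]_r) (j : 'I_r) : C :=
  let i := (part j : nat) in
  let t := thetas x c in
  if i == 0%N then x ord0 j * \prod_(m < c) t`_m ^ (- w m j)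
  else x ord0 j * (t`_(i.-1))^-1 * \prod_(m < c | (m < i.-1)%N) t`_m ^ (- w m j).

Definition phiW (x : 'rV[C]_r) : C := \sum_(j < r) phi_coord x j.

End Tower.

(* Main.v *)
Require Import Defs.
From HB Require Import structures.
From mathcomp Require Import all_boot all_order all_algebra.
From mathcomp Require Import all_classical all_reals all_analysis.
From mathcomp Require Import complex.
Set Implicit Arguments. Unset Strict Implicit. Unset Printing Implicit Defensive.
Import Order.TTheory GRing.Theory Num.Theory.
Import numFieldNormedType.Exports.
Local Open Scope ring_scope.
From mathcomp Require Import ring.

Definition pdiff (R : realType) r (f : 'rV[R[i]]_r -> (R[i])^o) :=
  forall x : 'rV[R[i]]_r, differentiable f (x : ('rV[R[i]]_r : normedModType R[i])).

Lemma pdiff_cst (R : realType) r (a : R[i]) : pdiff (fun _ : 'rV[R[i]]_r => (a : R[i]^o)).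
Proof. move=> x; exact: differentiable_cst. Qed.

Lemma pdiffD (R : realType) r (f g : 'rV[R[i]]_r -> (R[i])^o) :
  pdiff f -> pdiff g -> pdiff (fun x => f x + g x).
Proof. move=> hf hg x; exact: differentiableD. Qed.

Lemma pdiffM (R : realType) r (f g : 'rV[R[i]]_r -> (R[i])^o) :
  pdiff f -> pdiff g -> pdiff (fun x => f x * g x).
Proof. move=> hf hg x; exact: differentiableM. Qed.

Lemma pdiff_coord (R : realType) r (k : 'I_r) :
  pdiff (fun x : 'rV[R[i]]_r => (x ord0 k : R[i]^o)).
Proof. move=> x; exact: differentiable_coord. Qed.

Lemma pdiff_sum (R : realType) r (I : Type) (s : seq I) (P : pred I)
  (F : I -> 'rV[R[i]]_r -> (R[i])^o) :
  (forall j, P j -> pdiff (F j)) -> pdiff (fun x => \sum_(j <- s | P j) F j x).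
Proof.
move=> hF; elim: s => [|a s IH].
  by under eq_fun do rewrite big_nil; exact: pdiff_cst.
under eq_fun do rewrite big_cons.
case Pa: (P a); last exact: IH.
exact: pdiffD (hF _ Pa) IH.
Qed.

Lemma pdiff_prod (R : realType) r (I : Type) (s : seq I) (P : pred I)
  (F : I -> 'rV[R[i]]_r -> (R[i])^o) :
  (forall j, P j -> pdiff (F j)) -> pdiff (fun x => \prod_(j <- s | P j) F j x).
Proof.
move=> hF; elim: s => [|a s IH].
  by under eq_fun do rewrite big_nil; exact: pdiff_cst.
under eq_fun do rewrite big_cons.
case Pa: (P a); last exact: IH.
exact: pdiffM (hF _ Pa) IH.
Qed.

Lemma pdiffXz (R : realType) r (f : 'rV[R[i]]_r -> (R[i])^o) (z : int) :
  (0 <= z) -> pdiff f -> pdiff (fun x => f x ^ z).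
Proof.
case: z => [n|n] // _ hf; elim: n => [|n IH].
  by under eq_fun do rewrite expr0z; exact: pdiff_cst.
under eq_fun do rewrite -exprnP exprS.
exact: pdiffM hf IH.
Qed.

Definition th (R : realType) r c (part : 'I_r -> 'I_c.+1) (w : 'I_c -> 'I_r -> int)
  (x : 'rV[R[i]]_r) (m : nat) : R[i] := (thetas part w x m.+1)`_m.

Lemma size_thetas (R : realType) r c (part : 'I_r -> 'I_c.+1) (w : 'I_c -> 'I_r -> int)
  (x : 'rV[R[i]]_r) n : size (thetas part w x n) = n.
Proof. by elim: n => //= n IH; rewrite size_rcons IH. Qed.

Lemma thetas_nth (R : realType) r c (part : 'I_r -> 'I_c.+1) (w : 'I_c -> 'I_r -> int)
  (x : 'rV[R[i]]_r) n m : (m < n)%N -> (thetas part w x n)`_m = th part w x m.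
Proof.
elim: n => // n IH; rewrite ltnS leq_eqVlt => /orP[/eqP ->|lt] //.
by rewrite /= nth_rcons size_thetas lt IH.
Qed.

Lemma th_eq (R : realType) r c (part : 'I_r -> 'I_c.+1) (w : 'I_c -> 'I_r -> int)
  (x : 'rV[R[i]]_r) m : th part w x m =
  \sum_(j < r | (part j : nat) == m.+1)
     (\prod_(k < c | (k < m)%N) th part w x k ^ (- w k j)) * x ord0 j.
Proof.
rewrite /th /= nth_rcons size_thetas ltnn eqxx.
apply: eq_bigr => j _; congr (_ * _); apply: eq_bigr => k km.
by rewrite thetas_nth.
Qed.

Lemma pdiff_th (R : realType) r c (part : 'I_r -> 'I_c.+1) (w : 'I_c -> 'I_r -> int)
  (hw : forall (m : 'I_c) (k : 'I_r), w m k <= 0) m :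
  pdiff (fun x : 'rV[R[i]]_r => th part w x m).
Proof.
elim/ltn_ind: m => m IH.
rewrite (_ : (fun x => _) = (fun x => \sum_(j < r | (part j : nat) == m.+1)
     (\prod_(k < c | (k < m)%N) th part w x k ^ (- w k j)) * x ord0 j)); last first.
  by apply/funext => x; rewrite th_eq.
apply: pdiff_sum => j _; apply: pdiffM; last exact: pdiff_coord.
apply: pdiff_prod => k km; apply: pdiffXz; first by rewrite oppr_ge0.
exact: IH.
Qed.

Definition Fdef (R : realType) r c (part : 'I_r -> 'I_c.+1) (w : 'I_c -> 'I_r -> int)
  (x : 'rV[R[i]]_r) : R[i]^o :=
  c%:R + \sum_(j < r | (part j : nat) == 0%N)
            x ord0 j * \prod_(m < c) th part w x m ^ (- w m j).

Lemma pdiff_F (R : realType) r c (part : 'I_r -> 'I_c.+1) (w : 'I_c -> 'I_r -> int)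
  (hw : forall (m : 'I_c) (k : 'I_r), w m k <= 0) : pdiff (@Fdef R r c part w).
Proof.
apply: pdiffD; first exact: pdiff_cst.
apply: pdiff_sum => j _; apply: pdiffM; first exact: pdiff_coord.
apply: pdiff_prod => k _; apply: pdiffXz; first by rewrite oppr_ge0.
exact: pdiff_th.
Qed.

Lemma gcancel (R : realType) (a : R[i]) (z : int) : a != 0 -> a ^ (- z) * a ^ z = 1.
Proof. by move=> a0; rewrite -expfzDr // addNr expr0z. Qed.

Lemma th_tact (R : realType) r c (part : 'I_r -> 'I_c.+1) (w : 'I_c -> 'I_r -> int)
  (g : 'I_c -> R[i]) (x : 'rV[R[i]]_r) : (forall j, g j != 0) ->
  forall m : 'I_c, th part w (tact part w g x) m = g m * th part w x m.
Proof.
move=> g0.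
suff H : forall n (m : 'I_c), (m < n)%N ->
   th part w (tact part w g x) m = g m * th part w x m.
  by move=> m; apply: (H m.+1).
elim=> // n IH m mn.
rewrite !th_eq mulr_sumr; apply: eq_bigr => j /eqP pj.
rewrite mxE.
have -> : \prod_(k < c | (k < m)%N) th part w (tact part w g x) k ^ (- w k j) =
   \prod_(k < c | (k < m)%N) g k ^ (- w k j) *
   \prod_(k < c | (k < m)%N) th part w x k ^ (- w k j).
  rewrite -big_split /=; apply: eq_bigr => k km.
  by rewrite IH ?(leq_trans km) // expfzMl.
have -> : \prod_(k < c) g k ^ zeta part w j k =
   \prod_(k < c | (k < m)%N) g k ^ (w k j) * g m.
  rewrite (bigID (fun k : 'I_c => (k < m)%N)) /=.
  rewrite [X in _ * X](bigD1 m) ?ltnn //= [X in _ * (_ * X)]big1; last first.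
    move=> k /andP[km kneq]; rewrite /zeta pj /= ltnS (negbTE km) eqSS.
    by rewrite ifF ?expr0z //; apply/negbTE; exact: kneq.
  rewrite mulr1; congr (_ * _); last by rewrite /zeta pj /= ltnn eqxx expr1z.
  by apply: eq_bigr => k km; rewrite /zeta pj /= ltnS km.
set A := \prod_(k < c | _) g k ^ (- _).
set B := \prod_(k < c | _) th _ _ _ _ ^ _.
set G := \prod_(k < c | _) g k ^ (w _ _).
have AG : A * G = 1.
  rewrite /A /G -big_split /= big1 // => k _; exact: gcancel.
by rewrite -[RHS]mul1r -AG; ring.
Qed.

Lemma F_tact (R : realType) r c (part : 'I_r -> 'I_c.+1) (w : 'I_c -> 'I_r -> int)
  (g : 'I_c -> R[i]) (x : 'rV[R[i]]_r) : (forall j, g j != 0) ->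
  Fdef part w (tact part w g x) = Fdef part w x.
Proof.
move=> g0; rewrite /Fdef; congr (_ + _); apply: eq_bigr => j /eqP pj.
rewrite mxE.
have -> : \prod_(k < c) th part w (tact part w g x) k ^ (- w k j) =
   \prod_(k < c) g k ^ (- w k j) * \prod_(k < c) th part w x k ^ (- w k j).
  rewrite -big_split /=; apply: eq_bigr => k _.
  by rewrite th_tact // expfzMl.
have -> : \prod_(k < c) g k ^ zeta part w j k = \prod_(k < c) g k ^ (w k j).
  by apply: eq_bigr => k _; rewrite /zeta pj.
set A := \prod_(k < c) g k ^ (- _).
set B := \prod_(k < c) th _ _ _ _ ^ _.
set G := \prod_(k < c) g k ^ (w _ _).
have AG : A * G = 1.
  rewrite /A /G -big_split /= big1 // => k _; exact: gcancel.
by rewrite -[RHS]mul1r -AG; ring.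
Qed.

Lemma F_phiW (R : realType) r c (part : 'I_r -> 'I_c.+1) (w : 'I_c -> 'I_r -> int)
  (x : 'rV[R[i]]_r) : (forall m : 'I_c, theta part w x m != 0) ->
  Fdef part w x = phiW part w x.
Proof.
move=> H.
rewrite /phiW (partition_big part xpredT) //= big_ord_recl /Fdef addrC.
congr (_ + _); last first.
  apply: eq_big => [j|j /eqP pj]; first by [].
  rewrite /phi_coord pj /=; congr (_ * _); apply: eq_bigr => m _.
  by rewrite thetas_nth.
symmetry; transitivity (\sum_(i < c) (1 : R[i])); first last.
  by rewrite sumr_const card_ord.
apply: eq_bigr => i _.
have hth := H i; rewrite /theta thetas_nth // in hth.
transitivity ((th part w x i)^-1 * \sum_(j < r | (part j : nat) == i.+1)
     (\prod_(k < c | (k < i)%N) th part w x k ^ (- w k j)) * x ord0 j); last first.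
  by rewrite -th_eq mulVf.
rewrite mulr_sumr; apply: eq_big => [j|j /eqP pj]; first by [].
rewrite /phi_coord pj /= thetas_nth //.
have -> : \prod_(m < c | (m < i)%N) (thetas part w x c)`_m ^ (- w m j) =
   \prod_(k < c | (k < i)%N) th part w x k ^ (- w k j).
  by apply: eq_bigr => m _; rewrite thetas_nth.
ring.
by rewrite add0n.
Qed.

Unset Implicit Arguments.
Theorem proposition3p3 (R : realType) (r c : nat)
    (part : 'I_r -> 'I_c.+1) (w : 'I_c -> 'I_r -> int)
    (hw : forall (m : 'I_c) (k : 'I_r), w m k <= 0) :
  exists F : 'rV[R[i]]_r -> (R[i])^o,
    (* F is a function on {[x] in E : x_1 ... x_r <> 0}: invariant under the torus action *)
    (forall (g : 'I_c -> R[i]) (x : 'rV[R[i]]_r),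
        (forall j, g j != 0) -> (forall k, x ord0 k != 0) ->
        F (tact part w g x) = F x) /\
    (* F is holomorphic there *)
    (forall x : 'rV[R[i]]_r, (forall k, x ord0 k != 0) ->
        differentiable F (x : ('rV[R[i]]_r : normedModType R[i]))) /\
    (* F extends phi^* W from U = {theta_i <> 0, x_k <> 0} *)
    (forall x : 'rV[R[i]]_r, (forall k, x ord0 k != 0) ->
        (forall m : 'I_c, theta part w x m != 0) ->
        F x = phiW part w x).
Proof.
exists (@Fdef R r c part w); split; first by move=> g x g0 _; exact: F_tact.
split; first by move=> x _; exact: pdiff_F.
by move=> x _ H; exact: F_phiW.
Qed.
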